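(* Let $s_\theta$ be the Sturmian word of irrational slope $\theta\in(0,1)$. For every $m\ge1$, every $1\le k\le m$, and every ordered partition $P_k=(p_1,\dots,p_k)$ of $m$, the set $\mathcal{L}_{(m,k)}$ of $P_k$-partitioned factors of length $m$ of $s_\theta$ admits exactly $k+1$ varieties.
   Context: For irrational $\theta\in(0,1)$, $s_\theta=s_0s_1s_2\cdots$ is the infinite word over $\{a<b\}$ with $s_n=a$ if $\{n\theta\}\in[0,1-\theta)$ and $s_n=b$ if $\{n\theta\}\in[1-\theta,1)$, where $\{x\}$ denotes the fractional part. A factor of length $m$ is a word $s_j\cdots s_{j+m-1}$, $j\ge0$; $\mathcal{L}_m$ is the set of factors of length $m$. For an ordered partition $P_k=(p_1,\dots,p_k)$ of $m$ (positive integers summing to $m$), $\mathcal{L}_{(m,k)}$ is the set of factorizations $u=u_1\cdots u_k$, $|u_i|=p_i$, of the $u\in\mathcal{L}_m$. The height profile of $u$ is $\langle |u_1|_b,\dots,|u_k|_b\rangle$ ($|v|_b$ = number of $b$'s in $v$); partitioned factors with equal height profiles are of the same variety, and varieties are the equivalence classes. *)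

(* Defs.v *)
From Stdlib Require Import Reals List Arith.
Import ListNotations.
Open Scope R_scope.

Definition irrational (theta : R) : Prop :=
  forall (p q : Z), q <> 0%Z -> theta <> IZR p / IZR q.

(* Letters: false = a, true = b (a < b). *)
Definition sturm (theta : R) (n : nat) : bool :=
  if Rle_dec (1 - theta) (frac_part (INR n * theta)) then true else false.

Definition factor (theta : R) (j m : nat) : list bool :=
  map (fun i => sturm theta (j + i)) (seq 0 m).

Fixpoint split_by (P : list nat) (u : list bool) : list (list bool) :=
  match P with
  | [] => []
  | p :: P' => firstn p u :: split_by P' (skipn p u)
  end.

Definition count_b (v : list bool) : nat := count_occ Bool.bool_dec v true.

Definition height_profile (P : list nat) (u : list bool) : list nat :=
  map count_b (split_by P u).

Definition ordered_partition (P : list nat) (m : nat) : Prop :=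
  Forall (fun p => (0 < p)%nat) P /\ list_sum P = m.

(* The set of varieties of L_(m,k): the set of height profiles occurring.
   It has exactly n elements iff it is enumerated by a duplicate-free list of length n. *)
Definition num_varieties_is (theta : R) (P : list nat) (m n : nat) : Prop :=
  exists L : list (list nat),
    NoDup L /\ length L = n /\
    forall h : list nat,
      In h L <-> exists j : nat, height_profile P (factor theta j m) = h.

(* Main.v *)
Require Import Defs.
From Stdlib Require Import Reals List Arith Lia ZArith Lra Classical ClassicalEpsilon.
Import ListNotations.
Open Scope R_scope.

Lemma Int_part_unique (x : R) (z : Z) : IZR z <= x < IZR z + 1 -> Int_part x = z.
Proof.
  intros [H1 H2]. destruct (base_Int_part x) as [B1 B2].
  assert (A1 : (z < Int_part x + 1)%Z).
  { apply lt_IZR. rewrite plus_IZR. simpl. lra. }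
  assert (A2 : (Int_part x < z + 1)%Z).
  { apply lt_IZR. rewrite plus_IZR. simpl. lra. }
  lia.
Qed.

Lemma frac_unique (x y : R) (z : Z) : 0 <= y < 1 -> x = IZR z + y -> frac_part x = y.
Proof.
  intros Hy Hx. unfold frac_part. rewrite (Int_part_unique x z) by lra. lra.
Qed.

Lemma frac_decomp (x : R) : x = IZR (Int_part x) + frac_part x.
Proof. unfold frac_part. ring. Qed.

Lemma Int_part_add (x y : R) :
  Int_part (x + y) = (Int_part x + Int_part y +
    (if Rle_dec (1 - frac_part y) (frac_part x) then 1 else 0))%Z.
Proof.
  pose proof (base_fp x) as [F1 F2]. pose proof (base_fp y) as [G1 G2].
  apply Int_part_unique.
  pose proof (frac_decomp x) as Dx. pose proof (frac_decomp y) as Dy.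
  destruct (Rle_dec (1 - frac_part y) (frac_part x));
  rewrite !plus_IZR; simpl; lra.
Qed.

Lemma frac_bounds (x : R) : 0 <= frac_part x < 1.
Proof. pose proof (base_fp x). lra. Qed.

Lemma irr_not_int (theta : R) (Hirr : irrational theta) (c : nat) (z : Z) :
  (1 <= c)%nat -> INR c * theta <> IZR z.
Proof.
  intros Hc E. apply (Hirr z (Z.of_nat c)).
  - lia.
  - rewrite <- INR_IZR_INZ. rewrite <- E. field.
    apply not_0_INR. lia.
Qed.

Lemma irr_frac_nz (theta : R) (Hirr : irrational theta) (c : nat) :
  (1 <= c)%nat -> frac_part (INR c * theta) <> 0.
Proof.
  intros Hc E. apply (irr_not_int theta Hirr c (Int_part (INR c * theta)) Hc).
  rewrite (frac_decomp (INR c * theta)) at 1. rewrite E. ring.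
Qed.

Lemma frac_inj (theta : R) (Hirr : irrational theta) (c c' : nat) :
  frac_part (INR c * theta) = frac_part (INR c' * theta) -> c = c'.
Proof.
  intros E.
  assert (forall a b : nat, (b < a)%nat ->
     frac_part (INR a * theta) = frac_part (INR b * theta) -> False).
  { intros a b Hab Eab.
    apply (irr_not_int theta Hirr (a - b) (Int_part (INR a * theta) - Int_part (INR b * theta))).
    - lia.
    - rewrite minus_INR by lia. rewrite minus_IZR.
      rewrite Rmult_minus_distr_r.
      rewrite (frac_decomp (INR a * theta)) at 1.
      rewrite (frac_decomp (INR b * theta)) at 1. rewrite Eab. ring. }
  destruct (Nat.lt_trichotomy c c') as [h|[h|h]]; auto.
  - exfalso. apply (H c' c h). auto.
  - exfalso. apply (H c c' h). auto.
Qed.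

Lemma pigeon (n : nat) (f : nat -> nat) :
  (forall i, (i <= n)%nat -> (f i < n)%nat) ->
  exists i j, (i < j <= n)%nat /\ f i = f j.
Proof.
  revert f. induction n as [|n IH]; intros f Hf.
  - specialize (Hf 0%nat (le_n 0)). lia.
  - destruct (classic (exists i, (i <= n)%nat /\ f i = f (S n))) as [[i [Hi E]]|Hno].
    + exists i, (S n). split; [lia|auto].
    + set (v := f (S n)).
      set (g := fun i => if Nat.eq_dec (f i) n then v else f i).
      destruct (IH g) as [i [j [Hij E]]].
      { intros i Hi. unfold g. destruct (Nat.eq_dec (f i) n) as [e|e].
        - assert (v < S n)%nat by (apply Hf; lia).
          destruct (Nat.eq_dec v n); [|lia].
          exfalso. apply Hno. exists i. split; auto. unfold v in *; lia.
        - assert (f i < S n)%nat by (apply Hf; lia). lia. }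
      exists i, j. split; [lia|].
      unfold g in E.
      destruct (Nat.eq_dec (f i) n); destruct (Nat.eq_dec (f j) n); try lia.
      * exfalso. apply Hno. exists j. split; [lia|]. unfold v in *; lia.
      * exfalso. apply Hno. exists i. split; [lia|]. unfold v in *; lia.
Qed.

Lemma Int_part_range (y : R) (N : nat) : 0 <= y < INR N ->
  (0 <= Int_part y /\ Int_part y < Z.of_nat N)%Z.
Proof.
  intros Hy. destruct (base_Int_part y) as [B1 B2]. rewrite INR_IZR_INZ in Hy.
  split.
  - apply Z.lt_succ_r. apply lt_IZR. unfold Z.succ. rewrite plus_IZR. simpl. lra.
  - apply lt_IZR. lra.
Qed.

Lemma small_frac (theta : R) (N : nat) : (1 <= N)%nat ->
  exists q, (1 <= q)%nat /\
    (INR N * frac_part (INR q * theta) < 1 \/ INR N * (1 - frac_part (INR q * theta)) < 1).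
Proof.
  intros HN.
  set (fr := fun i : nat => frac_part (INR i * theta)).
  set (f := fun i : nat => Z.to_nat (Int_part (INR N * fr i))).
  assert (Hrange : forall i, 0 <= INR N * fr i < INR N).
  { intros i. pose proof (frac_bounds (INR i * theta)). unfold fr.
    assert (0 < INR N) by (apply lt_0_INR; lia). split; nra. }
  destruct (pigeon N f) as [i [j [Hij E]]].
  { intros i _. unfold f. pose proof (Int_part_range _ _ (Hrange i)). lia. }
  unfold f in E.
  pose proof (Int_part_range _ _ (Hrange i)). pose proof (Int_part_range _ _ (Hrange j)).
  assert (E' : Int_part (INR N * fr i) = Int_part (INR N * fr j)) by lia.
  assert (Hd : INR N * fr j - INR N * fr i < 1 /\ INR N * fr i - INR N * fr j < 1).
  { destruct (base_Int_part (INR N * fr i)). destruct (base_Int_part (INR N * fr j)).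
    rewrite E' in *. lra. }
  exists (j - i)%nat. split; [lia|].
  pose proof (frac_decomp (INR i * theta)) as Di.
  pose proof (frac_decomp (INR j * theta)) as Dj.
  fold (fr i) in Di. fold (fr j) in Dj.
  pose proof (frac_bounds (INR i * theta)). pose proof (frac_bounds (INR j * theta)).
  fold (fr i) in H1. fold (fr j) in H2.
  assert (Eq : INR (j - i) * theta = INR j * theta - INR i * theta).
  { rewrite minus_INR by lia. ring. }
  destruct (Rle_dec (fr i) (fr j)).
  - left. rewrite (frac_unique _ (fr j - fr i)
      (Int_part (INR j * theta) - Int_part (INR i * theta))).
    + lra.
    + lra.
    + rewrite Eq, minus_IZR. lra.
  - right. rewrite (frac_unique _ (1 + fr j - fr i)
      (Int_part (INR j * theta) - Int_part (INR i * theta) - 1)).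
    + lra.
    + lra.
    + rewrite Eq, !minus_IZR. simpl. lra.
Qed.

Lemma find_mult (a eps : R) : 0 <= a -> 0 < eps ->
  exists n : nat, a < INR n * eps <= a + eps.
Proof.
  intros Ha He.
  set (z := Int_part (a / eps)).
  destruct (base_Int_part (a / eps)) as [B1 B2]. fold z in B1, B2.
  assert (Hz : (0 <= z)%Z).
  { apply Z.lt_succ_r. apply lt_IZR. unfold Z.succ. rewrite plus_IZR. simpl.
    assert (0 <= a / eps) by (unfold Rdiv; apply Rmult_le_pos; [lra|left; apply Rinv_0_lt_compat; lra]). lra. }
  exists (Z.to_nat (z + 1)).
  rewrite INR_IZR_INZ, Z2Nat.id by lia. rewrite plus_IZR. simpl.
  assert (a = (a / eps) * eps) by (field; lra).
  split; nra.
Qed.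

Lemma density (theta : R) (Hirr : irrational theta) (a b : R) :
  0 <= a < b -> b <= 1 -> exists j : nat, a < frac_part (INR j * theta) < b.
Proof.
  intros Hab Hb.
  destruct (archimed (1 / (b - a))) as [A1 _].
  assert (Hup : (0 < up (1 / (b - a)))%Z).
  { apply lt_IZR. simpl. assert (0 < 1 / (b - a)) by (apply Rdiv_lt_0_compat; lra). lra. }
  set (N := Z.to_nat (up (1 / (b - a)))).
  assert (HN : INR N * (b - a) > 1).
  { unfold N. rewrite INR_IZR_INZ, Z2Nat.id by lia.
    assert (1 = 1 / (b - a) * (b - a)) by (field; lra). nra. }
  assert (HN1 : (1 <= N)%nat) by (unfold N; lia).
  assert (HNp : 0 < INR N) by (apply lt_0_INR; lia).
  destruct (small_frac theta N HN1) as [q [Hq Hs]].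
  set (d := frac_part (INR q * theta)) in *.
  pose proof (frac_bounds (INR q * theta)) as Fb. fold d in Fb.
  assert (dnz : d <> 0) by (apply irr_frac_nz; auto).
  pose proof (frac_decomp (INR q * theta)) as Dq. fold d in Dq.
  set (I := Int_part (INR q * theta)) in *.
  destruct Hs as [Hs|Hs].
  - assert (Hd : d < b - a) by nra.
    destruct (find_mult a d) as [n Hn]; [lra|lra|].
    exists (n * q)%nat.
    rewrite (frac_unique _ (INR n * d) (Z.of_nat n * I)).
    + lra.
    + lra.
    + rewrite mult_INR, mult_IZR, <- INR_IZR_INZ. rewrite Rmult_assoc, Dq. ring.
  - assert (Hd : 1 - d < b - a) by nra.
    destruct (find_mult (1 - b) (1 - d)) as [n Hn]; [lra|lra|].
    exists (n * q)%nat.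
    rewrite (frac_unique _ (1 - INR n * (1 - d))
        (Z.of_nat n * (I + 1) - 1)).
    + lra.
    + lra.
    + rewrite mult_INR, minus_IZR, mult_IZR, plus_IZR, <- INR_IZR_INZ.
      rewrite Rmult_assoc, Dq. simpl. ring.
Qed.

Fixpoint wr (theta : R) (a n : nat) : list bool :=
  match n with
  | O => []
  | S n' => sturm theta a :: wr theta (S a) n'
  end.

Fixpoint hp_aux (theta : R) (P : list nat) (a : nat) : list nat :=
  match P with
  | [] => []
  | p :: P' => count_b (wr theta a p) :: hp_aux theta P' (a + p)
  end.

Fixpoint psums (P : list nat) (c : nat) : list nat :=
  match P with
  | [] => []
  | p :: P' => (c + p)%nat :: psums P' (c + p)
  end.

Definition Bb (theta x : R) (c : nat) : bool :=
  if Rle_dec (1 - frac_part (INR c * theta)) x then true else false.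

Definition bz (b : bool) : Z := if b then 1%Z else 0%Z.

Lemma factor_wr_gen theta j s m :
  map (fun i => sturm theta (j + i)) (seq s m) = wr theta (j + s) m.
Proof.
  revert s. induction m as [|m IH]; intros s; simpl; auto.
  rewrite IH. f_equal. f_equal. lia.
Qed.

Lemma factor_wr theta j m : factor theta j m = wr theta j m.
Proof. unfold factor. rewrite factor_wr_gen. f_equal. lia. Qed.

Lemma wr_app theta a p s : wr theta a (p + s) = wr theta a p ++ wr theta (a + p) s.
Proof.
  revert a. induction p as [|p IH]; intros a; simpl.
  - f_equal. lia.
  - rewrite IH. f_equal. f_equal. f_equal. lia.
Qed.

Lemma wr_length theta a p : length (wr theta a p) = p.
Proof. revert a; induction p; intros; simpl; auto. Qed.

Lemma firstn_len {A} (l1 l2 : list A) n : length l1 = n -> firstn n (l1 ++ l2) = l1.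
Proof. intros <-. induction l1; simpl; [reflexivity|f_equal; auto]. Qed.

Lemma skipn_len {A} (l1 l2 : list A) n : length l1 = n -> skipn n (l1 ++ l2) = l2.
Proof. intros <-. induction l1; simpl; auto. Qed.

Lemma hp_eq theta P a :
  height_profile P (wr theta a (list_sum P)) = hp_aux theta P a.
Proof.
  unfold height_profile. revert a. induction P as [|p P IH]; intros a; simpl; auto.
  rewrite wr_app.
  rewrite firstn_len by apply wr_length.
  rewrite skipn_len by apply wr_length. simpl. f_equal. apply IH.
Qed.

Lemma sturm_step theta (Ht : 0 < theta < 1) n :
  Int_part (INR (S n) * theta) =
  (Int_part (INR n * theta) + (if sturm theta n then 1 else 0))%Z.
Proof.
  rewrite S_INR. replace ((INR n + 1) * theta) with (INR n * theta + theta) by ring.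
  rewrite Int_part_add.
  rewrite (Int_part_unique theta 0) by (simpl; lra).
  rewrite (frac_unique theta theta 0) by (simpl; lra).
  unfold sturm. destruct (Rle_dec (1 - theta) (frac_part (INR n * theta))); lia.
Qed.

Lemma count_wr theta (Ht : 0 < theta < 1) a p :
  Z.of_nat (count_b (wr theta a p)) =
  (Int_part (INR (a + p) * theta) - Int_part (INR a * theta))%Z.
Proof.
  revert a. induction p as [|p IH]; intros a.
  - simpl. rewrite Nat.add_0_r. lia.
  - simpl wr. unfold count_b.
    replace (a + S p)%nat with (S a + p)%nat by lia.
    pose proof (IH (S a)) as IHa. rewrite sturm_step in IHa by auto.
    destruct (sturm theta a).
    + rewrite count_occ_cons_eq by reflexivity. rewrite Nat2Z.inj_succ.
      fold (count_b (wr theta (S a) p)). lia.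
    + rewrite count_occ_cons_neq by discriminate.
      fold (count_b (wr theta (S a) p)). lia.
Qed.

Lemma Int_part_jc theta j c :
  Int_part (INR (j + c) * theta) =
  (Int_part (INR j * theta) + Int_part (INR c * theta)
   + bz (Bb theta (frac_part (INR j * theta)) c))%Z.
Proof.
  rewrite plus_INR, Rmult_plus_distr_r, Int_part_add. unfold bz, Bb.
  destruct Rle_dec; lia.
Qed.

Lemma count_wr2 theta (Ht : 0 < theta < 1) j c p :
  Z.of_nat (count_b (wr theta (j + c) p)) =
  (Int_part (INR (c + p) * theta) - Int_part (INR c * theta)
   + bz (Bb theta (frac_part (INR j * theta)) (c + p))
   - bz (Bb theta (frac_part (INR j * theta)) c))%Z.
Proof.
  rewrite count_wr by auto.
  replace (j + c + p)%nat with (j + (c + p))%nat by lia.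
  rewrite !Int_part_jc. lia.
Qed.

Lemma hpA theta (Ht : 0 < theta < 1) P c j j' :
  Bb theta (frac_part (INR j * theta)) c = Bb theta (frac_part (INR j' * theta)) c ->
  (hp_aux theta P (j + c) = hp_aux theta P (j' + c) <->
   map (Bb theta (frac_part (INR j * theta))) (psums P c) =
   map (Bb theta (frac_part (INR j' * theta))) (psums P c)).
Proof.
  revert c. induction P as [|p P IH]; intros c Hc; simpl.
  - tauto.
  - replace (j + c + p)%nat with (j + (c + p))%nat by lia.
    replace (j' + c + p)%nat with (j' + (c + p))%nat by lia.
    pose proof (count_wr2 theta Ht j c p) as E1.
    pose proof (count_wr2 theta Ht j' c p) as E2.
    split.
    + intros H. injection H as H1 H2.
      assert (Hb : Bb theta (frac_part (INR j * theta)) (c + p) =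
                   Bb theta (frac_part (INR j' * theta)) (c + p)).
      { apply (f_equal Z.of_nat) in H1. rewrite E1, E2, Hc in H1.
        unfold bz in H1. destruct (Bb theta (frac_part (INR j * theta)) (c + p)); destruct (Bb theta (frac_part (INR j' * theta)) (c + p)); destruct (Bb theta (frac_part (INR j' * theta)) c); auto; lia. }
      rewrite Hb. f_equal. apply IH; auto.
    + intros H. injection H as H1 H2. f_equal.
      * apply Nat2Z.inj. rewrite E1, E2, Hc, H1. reflexivity.
      * apply IH; auto.
Qed.

Lemma psums_gt P c : Forall (fun p => (0 < p)%nat) P ->
  forall x, In x (psums P c) -> (c < x)%nat.
Proof.
  revert c. induction P as [|p P IH]; intros c HF x Hx; simpl in *; [tauto|].
  inversion HF; subst. destruct Hx as [<-|Hx]; [lia|].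
  specialize (IH (c + p)%nat H2 x Hx). lia.
Qed.

Lemma psums_nodup P c : Forall (fun p => (0 < p)%nat) P -> NoDup (psums P c).
Proof.
  revert c. induction P as [|p P IH]; intros c HF; simpl; [constructor|].
  inversion HF; subst. constructor; auto.
  intros Hin. apply psums_gt in Hin; auto. lia.
Qed.

Lemma psums_length P c : length (psums P c) = length P.
Proof. revert c; induction P; intros; simpl; auto. Qed.

Lemma count_b_cons b l : count_b (b :: l) = ((if b then 1 else 0) + count_b l)%nat.
Proof.
  unfold count_b. destruct b.
  - rewrite count_occ_cons_eq by reflexivity. lia.
  - rewrite count_occ_cons_neq by discriminate. lia.
Qed.

Lemma Bb_true theta x c : Bb theta x c = true <-> 1 - frac_part (INR c * theta) <= x.
Proof. unfold Bb. destruct Rle_dec; split; intros; auto; try discriminate; tauto. Qed.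

Lemma Bb_mono theta x y c : x <= y -> Bb theta x c = true -> Bb theta y c = true.
Proof. intros Hxy H. apply Bb_true in H. apply Bb_true. lra. Qed.

Lemma cnt_le theta x y cs : x <= y ->
  (count_b (map (Bb theta x) cs) <= count_b (map (Bb theta y) cs))%nat.
Proof.
  intros Hxy. induction cs as [|c cs IH]; simpl; auto.
  rewrite !count_b_cons.
  destruct (Bb theta x c) eqn:E1; destruct (Bb theta y c) eqn:E2; try lia.
  rewrite (Bb_mono theta x y c Hxy E1) in E2. discriminate.
Qed.

Lemma cnt_eq theta x y cs : x <= y ->
  count_b (map (Bb theta x) cs) = count_b (map (Bb theta y) cs) ->
  map (Bb theta x) cs = map (Bb theta y) cs.
Proof.
  intros Hxy. induction cs as [|c cs IH]; simpl; auto.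
  rewrite !count_b_cons. intros H.
  pose proof (cnt_le theta x y cs Hxy).
  destruct (Bb theta x c) eqn:E1; destruct (Bb theta y c) eqn:E2.
  - f_equal. apply IH. lia.
  - rewrite (Bb_mono theta x y c Hxy E1) in E2. discriminate.
  - lia.
  - f_equal. apply IH. lia.
Qed.

Lemma V_r theta x y cs :
  count_b (map (Bb theta x) cs) = count_b (map (Bb theta y) cs) <->
  map (Bb theta x) cs = map (Bb theta y) cs.
Proof.
  split; [|intros ->; auto].
  intros H. destruct (Rle_dec x y).
  - apply cnt_eq; auto.
  - symmetry. apply cnt_eq; auto. lra.
Qed.

Lemma gap theta t cs : t < 1 ->
  exists g, 0 < g /\ t + g <= 1 /\
    forall c, In c cs -> t < 1 - frac_part (INR c * theta) ->
      t + g <= 1 - frac_part (INR c * theta).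
Proof.
  intros Ht. induction cs as [|c cs IH].
  - exists (1 - t). split; [lra|]. split; [lra|]. intros c [].
  - destruct IH as [g [G1 [G2 G3]]].
    destruct (Rlt_dec t (1 - frac_part (INR c * theta))).
    + exists (Rmin g (1 - frac_part (INR c * theta) - t)).
      pose proof (Rmin_l g (1 - frac_part (INR c * theta) - t)).
      pose proof (Rmin_r g (1 - frac_part (INR c * theta) - t)).
      split; [apply Rmin_glb_lt; lra|]. split; [lra|].
      intros c' [<-|Hc'] Hlt; [lra|]. specialize (G3 c' Hc' Hlt). lra.
    + exists g. split; [lra|]. split; [lra|].
      intros c' [<-|Hc'] Hlt; [lra|]. auto.
Qed.

Lemma hit theta (Hirr : irrational theta) t cs : 0 <= t < 1 ->
  exists j, map (Bb theta (frac_part (INR j * theta))) cs = map (Bb theta t) cs.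
Proof.
  intros Ht. destruct (gap theta t cs (proj2 Ht)) as [g [G1 [G2 G3]]].
  destruct (density theta Hirr t (t + g)) as [j Hj]; try lra.
  exists j. apply map_ext_in. intros c Hc.
  unfold Bb. destruct (Rle_dec (1 - frac_part (INR c * theta)) t).
  - destruct Rle_dec; auto. lra.
  - specialize (G3 c Hc ltac:(lra)). destruct Rle_dec; auto. lra.
Qed.

Lemma Bb0 theta x : x < 1 -> Bb theta x 0 = false.
Proof.
  intros Hx. unfold Bb. rewrite (frac_unique (INR 0 * theta) 0 0) by (simpl; lra).
  destruct Rle_dec; auto. lra.
Qed.

Theorem mainTheorem4 (theta : R) (Htheta : 0 < theta < 1) (Hirr : irrational theta)
  (m k : nat) (P : list nat) (Hm : (1 <= m)%nat) (Hk : (1 <= k <= m)%nat)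
  (HP : ordered_partition P m) (HPk : length P = k) :
  num_varieties_is theta P m (k + 1).
Proof.
  destruct HP as [HF Hsum]. subst m.
  set (cs := psums P 0).
  assert (Hcs_len : length cs = k) by (unfold cs; rewrite psums_length; auto).
  assert (Hcs1 : forall c, In c cs -> (1 <= c)%nat).
  { intros c Hc. apply psums_gt in Hc; auto. }
  set (xj := fun j : nat => frac_part (INR j * theta)).
  assert (Hx : forall j, 0 <= xj j < 1) by (intros; apply frac_bounds).
  set (V := fun x => map (Bb theta x) cs).
  set (r := fun x => count_b (V x)).
  set (prof := fun j => height_profile P (factor theta j (list_sum P))).
  assert (prof_iff : forall j j', prof j = prof j' <-> V (xj j) = V (xj j')).
  { intros j j'. unfold prof, V, xj. rewrite !factor_wr, !hp_eq.
    pose proof (hpA theta Htheta P 0 j j') as H. rewrite !Nat.add_0_r in H.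
    apply H. rewrite !Bb0; auto; apply Hx. }
  assert (rV : forall x y, r x = r y <-> V x = V y) by (intros; apply V_r).
  set (th := fun c : nat => 1 - frac_part (INR c * theta)).
  assert (Hth : forall c, In c cs -> 0 < th c < 1).
  { intros c Hc. unfold th. pose proof (frac_bounds (INR c * theta)).
    pose proof (irr_frac_nz theta Hirr c (Hcs1 c Hc)). lra. }
  assert (surj : forall n, (n <= k)%nat -> exists j, r (xj j) = n).
  { intros n Hn. destruct n as [|n].
    - destruct (hit theta Hirr 0 cs) as [j Hj]; [lra|].
      exists j. apply (proj2 (rV (xj j) 0)) in Hj. rewrite Hj.
      unfold r, V, count_b. apply count_occ_not_In. intros Hin.
      apply in_map_iff in Hin. destruct Hin as [c [Hc1 Hc2]].
      apply Bb_true in Hc1. specialize (Hth c Hc2). unfold th in Hth. lra.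
    - set (rth := fun c => r (th c)).
      assert (Hinj : forall c c', In c cs -> In c' cs -> rth c = rth c' -> c = c').
      { intros c c' Hc Hc' E. apply rV in E.
        assert (A1 : Bb theta (th c) c' = Bb theta (th c') c').
        { apply (ext_in_map E). auto. }
        assert (A2 : Bb theta (th c) c = Bb theta (th c') c).
        { apply (ext_in_map E). auto. }
        assert (T1 : Bb theta (th c') c' = true) by (apply Bb_true; unfold th; lra).
        assert (T2 : Bb theta (th c) c = true) by (apply Bb_true; unfold th; lra).
        rewrite T1 in A1. rewrite T2 in A2. symmetry in A2.
        apply Bb_true in A1. apply Bb_true in A2.
        unfold th in A1, A2. apply (frac_inj theta Hirr). lra. }
      assert (ND : NoDup (map rth cs)).
      { apply NoDup_map_NoDup_ForallPairs.
        - intros a b Ha Hb. apply Hinj; auto.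
        - apply psums_nodup; auto. }
      assert (Inc : incl (map rth cs) (seq 1 k)).
      { intros y Hy. apply in_map_iff in Hy. destruct Hy as [c [<- Hc]].
        apply in_seq. split.
        - unfold rth, r, V, count_b.
          assert (count_occ Bool.bool_dec (map (Bb theta (th c)) cs) true > 0)%nat.
          { apply count_occ_In. apply in_map_iff. exists c. split; auto.
            apply Bb_true. unfold th; lra. }
          lia.
        - unfold rth, r, V, count_b.
          pose proof (count_occ_bound Bool.bool_dec true (map (Bb theta (th c)) cs)).
          rewrite length_map in H. lia. }
      assert (Inc2 : incl (seq 1 k) (map rth cs)).
      { apply NoDup_length_incl; auto. rewrite length_map, length_seq. lia. }
      assert (Hn' : In (S n) (seq 1 k)) by (apply in_seq; lia).
      apply Inc2 in Hn'. apply in_map_iff in Hn'. destruct Hn' as [c [Hc1 Hc2]].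
      destruct (hit theta Hirr (th c) cs) as [j Hj].
      { specialize (Hth c Hc2). lra. }
      exists j. rewrite <- Hc1. unfold rth. apply rV. exact Hj. }
  assert (Hch : forall n, exists j, (n <= k)%nat -> r (xj j) = n).
  { intros n. destruct (le_dec n k) as [h|h].
    - destruct (surj n h) as [j Hj]. exists j. auto.
    - exists 0%nat. intros; lia. }
  set (f := fun n => proj1_sig (constructive_indefinite_description _ (Hch n))).
  assert (Hf : forall n, (n <= k)%nat -> r (xj (f n)) = n).
  { intros n Hn. unfold f. destruct (constructive_indefinite_description _ (Hch n)); simpl; auto. }
  exists (map (fun n => prof (f n)) (seq 0 (k + 1))).
  split; [|split].
  - apply NoDup_map_NoDup_ForallPairs; [|apply seq_NoDup].
    intros a b Ha Hb E. apply in_seq in Ha, Hb.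
    apply prof_iff in E. apply rV in E. rewrite !Hf in E by lia. auto.
  - rewrite length_map, length_seq. reflexivity.
  - intros h. split.
    + intros Hin. apply in_map_iff in Hin. destruct Hin as [n [<- _]].
      exists (f n). reflexivity.
    + intros [j <-]. apply in_map_iff. exists (r (xj j)). split.
      * fold (prof j). apply prof_iff. apply rV. rewrite Hf; auto.
        unfold r, V, count_b. pose proof (count_occ_bound Bool.bool_dec true (map (Bb theta (xj j)) cs)).
        rewrite length_map in H. lia.
      * apply in_seq. split; [lia|].
        unfold r, V, count_b. pose proof (count_occ_bound Bool.bool_dec true (map (Bb theta (xj j)) cs)).
        rewrite length_map in H. lia.
Qed.
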